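(* Let $k$ be a positive integer and let $G$ be a finite, simple, undirected, connected graph of order at least two. (a) If $G$ admits a pairing distance-$k$ resolving set, then $O_{R,k}(G)=\mathcal{M}$. (b) If $G$ admits a quasi-pairing distance-$k$ resolving set, then $O_{R,k}(G)\in\{\mathcal{M},\mathcal{N}\}$.
   Context: $d$ is the shortest-path distance and $d_k(x,y)=\min\{d(x,y),k+1\}$. A set $S\subseteq V(G)$ is a distance-$k$ resolving set if for all distinct $x,y$ some $z\in S$ has $d_k(x,z)\ne d_k(y,z)$. Let $\alpha$ be a positive integer and $X=\{\{u_1,w_1\},\dots,\{u_\alpha,w_\alpha\}\}$ a family of $\alpha$ pairwise disjoint 2-element subsets of $V(G)$ (so $|\bigcup X|=2\alpha$). Call $Z\subseteq V(G)$ a transversal of $X$ if $|Z|=\alpha$ and $Z\cap\{u_i,w_i\}\ne\emptyset$ for all $i$. $X$ is a pairing distance-$k$ resolving set if every transversal $Z$ of $X$ is a distance-$k$ resolving set. $X$ is a quasi-pairing distance-$k$ resolving set if no transversal of $X$ is a distance-$k$ resolving set, but there is a vertex $v\in V(G)-\bigcup X$ such that $Z\cup\{v\}$ is a distance-$k$ resolving set for every transversal $Z$. In the Maker-Breaker distance-$k$ resolving game on $G$, Maker and Breaker alternately select a not-yet-chosen vertex; Maker wins if his selected vertices form a distance-$k$ resolving set, Breaker wins otherwise. $O_{R,k}(G)=\mathcal{M}$ if Maker has a winning strategy whether he moves first or second, $\mathcal{B}$ if Breaker has a winning strategy whether she moves first or second, and $\mathcal{N}$ if the first player has a winning strategy.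 *)

(* Defs.v *)
From mathcomp Require Import all_boot.
Set Implicit Arguments. Unset Strict Implicit. Unset Printing Implicit Defensive.

Section Graph.
Variables (T : finType) (e : rel T).

Fixpoint ball (n : nat) (x : T) : {set T} :=
  match n with
  | 0 => [set x]
  | n'.+1 => ball n' x :|: [set y | [exists z in ball n' x, e z y]]
  end.

(* shortest-path distance; any shortest path has length < #|T|
   (returns #|T| if y is unreachable, which never happens in a connected graph) *)
Definition dist (x y : T) : nat := find (fun n => y \in ball n x) (iota 0 #|T|).

Definition distk (k : nat) (x y : T) : nat := minn (dist x y) k.+1.

Definition resolving (k : nat) (S : {set T}) : bool :=
  [forall x, forall y, (x != y) ==> [exists z in S, distk k x z != distk k y z]].

(* Maker-Breaker distance-k resolving game. M = Maker's vertices, B = Breaker's,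
   mturn = true iff it is Maker's turn. Fuel n bounds the number of remaining moves. *)
Fixpoint makerWins (k n : nat) (M B : {set T}) (mturn : bool) : bool :=
  match n with
  | 0 => resolving k M
  | n'.+1 =>
      let F := ~: (M :|: B) in
      if F == set0 then resolving k M else
      if mturn then [exists v in F, makerWins k n' (v |: M) B false]
      else [forall v in F, makerWins k n' M (v |: B) true]
  end.

Definition makerWinsFirst (k : nat) : bool := makerWins k #|T| set0 set0 true.
Definition makerWinsSecond (k : nat) : bool := makerWins k #|T| set0 set0 false.

Inductive outcome := OutM | OutB | OutN | OutUndef.

(* O_{R,k}(G): M if Maker wins as first and second player; B if Breaker wins
   as first and second player (i.e. Maker loses both); N if the first player
   wins (Maker wins moving first, Breaker wins moving first). *)
Definition ORk (k : nat) : outcome :=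
  match makerWinsFirst k, makerWinsSecond k with
  | true, true => OutM
  | false, false => OutB
  | true, false => OutN
  | false, true => OutUndef
  end.

Definition pair_family (X : {set {set T}}) : Prop :=
  0 < #|X| /\ (forall P, P \in X -> #|P| = 2) /\ trivIset X.

Definition transversal (X : {set {set T}}) (Z : {set T}) : bool :=
  (#|Z| == #|X|) && [forall P in X, Z :&: P != set0].

Definition pairing_resolving (k : nat) (X : {set {set T}}) : Prop :=
  pair_family X /\ forall Z, transversal X Z -> resolving k Z.

Definition quasi_pairing_resolving (k : nat) (X : {set {set T}}) : Prop :=
  pair_family X /\
  (forall Z, transversal X Z -> ~~ resolving k Z) /\
  exists v, v \notin cover X /\ forall Z, transversal X Z -> resolving k (v |: Z).

End Graph.

(* Main.v *)
Require Import Defs.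
From mathcomp Require Import all_boot.
Set Implicit Arguments. Unset Strict Implicit. Unset Printing Implicit Defensive.

Section Game.
Variables (T : finType) (e : rel T) (k : nat) (X : {set {set T}}).
Hypothesis X2 : forall P, P \in X -> #|P| = 2.
Hypothesis Xtriv : trivIset X.

Lemma Xeq P Q x : P \in X -> Q \in X -> x \in P -> x \in Q -> P = Q.
Proof.
move=> HP HQ xP xQ; apply/eqP; apply/negPn/negP => nPQ.
have := trivIsetP Xtriv P Q HP HQ nPQ.
by move/disjointFr => /(_ x xP); rewrite xQ.
Qed.

Lemma resolving_mono (S S' : {set T}) : resolving e k S -> S \subset S' -> resolving e k S'.
Proof.
move=> /forallP H sub; apply/forallP => x; apply/forallP => y.
apply/implyP => nxy; move: (H x) => /forallP /(_ y) /implyP /(_ nxy).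
case/existsP => z /andP [zS dz]; apply/existsP; exists z.
by rewrite (subsetP sub z zS).
Qed.

Lemma transv_exists (x0 : T) (M' : {set T}) : (forall P, P \in X -> exists2 x, x \in P & x \in M') ->
  exists Z, Defs.transversal X Z /\ Z \subset M'.
Proof.
move=> H.
pose f P := odflt x0 [pick x in P :&: M'].
have fP P : P \in X -> f P \in P /\ f P \in M'.
  move=> HP; rewrite /f; case: pickP => [x|] /=.
    by rewrite inE => /andP.
  by case: (H P HP) => x xP xM /(_ x); rewrite inE xP xM.
exists (f @: X); split.
  rewrite /Defs.transversal; apply/andP; split.
    rewrite card_in_imset //.
    move=> P Q HP HQ eqf; apply: (@Xeq P Q (f P)) => //; first by case: (fP P HP).
    by rewrite eqf; case: (fP Q HQ).
  apply/forallP => P; apply/implyP => HP; apply/set0Pn; exists (f P).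
  by rewrite inE imset_f //; case: (fP P HP).
by apply/subsetP => y /imsetP [P HP ->]; case: (fP P HP).
Qed.

Definition InvB (M B : {set T}) : Prop := forall P, P \in X ->
  (exists2 x, x \in P & x \in M) \/ {subset P <= ~: (M :|: B)}.
Definition InvM (u : T) (M B : {set T}) : Prop := forall P, P \in X ->
  (exists2 x, x \in P & x \in M) \/ {subset P <= ~: (M :|: B)} \/
  (u \in P /\ u \in ~: (M :|: B)).
Definition Good (M : {set T}) : Prop := forall M' : {set T}, M \subset M' ->
  (forall P, P \in X -> exists2 x, x \in P & x \in M') -> resolving e k M'.

Lemma card_dec (v : T) (S : {set T}) : v \in ~: S -> #|~: (v |: S)| < #|~: S|.
Proof.
move=> vS; rewrite (cardsD1 v (~: S)) vS add1n ltnS; apply: subset_leq_card.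
apply/subsetP => x; rewrite !inE negb_or => /andP [-> ->]; by [].
Qed.

Lemma final M B : ~: (M :|: B) = set0 -> Good M ->
  (InvB M B \/ exists u, InvM u M B) -> resolving e k M.
Proof.
move=> F0 G I; apply: G => //.
move=> P HP.
have nsub : ~ {subset P <= ~: (M :|: B)}.
  move=> sub; have : 0 < #|P| by rewrite X2.
  case/card_gt0P => x xP; have := sub x xP; by rewrite F0 inE.
case: I => [I|[u I]].
  by case: (I P HP) => // sub; exfalso; apply: nsub.
case: (I P HP) => [//|[sub|[_]]]; first by exfalso; apply: nsub.
by rewrite F0 inE.
Qed.

Lemma game n : forall M B, #|~: (M :|: B)| <= n -> Good M ->
  (InvB M B -> makerWins e k n M B false) /\
  (forall u, InvM u M B -> makerWins e k n M B true).
Proof.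
elim: n => [|n IH] M B Hn G.
  have F0 : ~: (M :|: B) = set0 by apply: cards0_eq; move: Hn; rewrite leqn0 => /eqP.
  by split => [I|u I] /=; apply: final F0 G _; eauto.
split => [I|u I] /=; case: eqP => [F0|Fn0];
  try by apply: final F0 G _; eauto.
- apply/forallP => v; apply/implyP => vF.
  have [u Hu] : exists u, forall P, P \in X -> v \in P -> u \in P /\ u != v.
    case: (boolP [exists P in X, v \in P]).
      case/existsP => P0 /andP [HP0 vP0].
      move/eqP: (X2 HP0); case/cards2P => a [b [nab eP0]].
      exists (if v == a then b else a) => P HP vP.
      rewrite (Xeq HP HP0 vP vP0) eP0.
      move: vP0; rewrite eP0 !inE.
      have [->|nva] := eqVneq v a.
        by move=> _; rewrite eqxx orbT eq_sym nab.
      by move=> /= /eqP ->; rewrite eqxx.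
    move=> nex; exists v => P HP vP; exfalso; move/negP: nex; apply.
    by apply/existsP; exists P; rewrite HP vP.
  have Hn' : #|~: (M :|: (v |: B))| <= n.
    by rewrite setUCA -ltnS; exact: leq_trans (card_dec vF) Hn.
  apply: ((IH M (v |: B) Hn' G).2 u).
  move=> P HP; case: (I P HP) => [h|sub]; [by left|right].
  case: (boolP (v \in P)) => vP.
    right; have [uP nuv] := Hu P HP vP; split => //.
    have := sub u uP; rewrite setUCA !inE; by rewrite (negbTE nuv).
  left => x xP; have := sub x xP; rewrite setUCA !inE.
  suff -> : (x == v) = false by [].
  by apply/negbTE; apply: contraNneq vP => <-.
- have [v [vF Hv]] : exists v, v \in ~: (M :|: B) /\ (u \in ~: (M :|: B) -> v = u).
    case: (boolP (u \in ~: (M :|: B))) => uF; first by exists u.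
    have /set0Pn [v vF] : ~: (M :|: B) != set0 by apply/eqP.
    by exists v; split => // /(negP uF).
  apply/existsP; exists v; rewrite vF /=.
  have Hn' : #|~: ((v |: M) :|: B)| <= n.
    by rewrite -setUA -ltnS; exact: leq_trans (card_dec vF) Hn.
  have G' : Good (v |: M).
    by move=> M' sub; apply: G; apply: subset_trans sub; apply: subsetUr.
  apply: (IH (v |: M) B Hn' G').1.
  move=> P HP; case: (I P HP) => [[x xP xM]|[sub|[uP uF]]].
  + by left; exists x; rewrite // inE xM orbT.
  + case: (boolP (v \in P)) => vP.
      by left; exists v; rewrite // setU11.
    right => x xP; have := sub x xP; rewrite -setUA !inE.
    suff -> : (x == v) = false by [].
    by apply/negbTE; apply: contraNneq vP => <-.
  + by left; exists u; rewrite // -(Hv uF) setU11.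
Qed.
End Game.

Theorem mainTheorem6 (T : finType) (e : rel T) (k : nat)
  (e_sym : symmetric e) (e_irr : irreflexive e)
  (conn : forall x y : T, connect e x y) (order2 : 1 < #|T|) (kpos : 0 < k) :
  ((exists X : {set {set T}}, pairing_resolving e k X) -> ORk e k = OutM) /\
  ((exists X : {set {set T}}, quasi_pairing_resolving e k X) ->
     ORk e k = OutM \/ ORk e k = OutN).
Proof.
have [x0 _] : exists x : T, true.
  by case/card_gt0P: (ltnW order2) => x _; exists x.
have fuel : #|~: ((set0 : {set T}) :|: set0)| <= #|T| by rewrite setU0 setC0 cardsT.
split.
  case => X [[Xpos [X2 Xtriv]] HZ].
  have G : Good e k X set0.
    move=> M' _ Hm; have [Z [tZ sZ]] := transv_exists Xtriv x0 Hm.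
    exact: resolving_mono (HZ Z tZ) sZ.
  have [hB hM] := game X2 Xtriv fuel G.
  rewrite /ORk /makerWinsFirst /makerWinsSecond hB ?(hM x0) //.
    by move=> P _; right; left => x _; rewrite setU0 setC0 inE.
  by move=> P _; right => x _; rewrite setU0 setC0 inE.
case => X [[Xpos [X2 Xtriv]] [_ [v [vX HZ]]]].
have first : makerWinsFirst e k.
  rewrite /makerWinsFirst.
  have E : #|T| = #|T|.-1.+1 by rewrite prednK // (ltnW order2).
  rewrite E /=; case: eqP => [F0|_].
    by move: (in_setT x0); rewrite -setC0 -(setU0 set0) F0 inE.
  apply/existsP; exists v; rewrite setU0 setC0 inE /=.
  have fuel' : #|~: ((v |: set0) :|: (set0 : {set T}))| <= #|T|.-1.
    by rewrite !setU0 cardsC1.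
  have G : Good e k X (v |: set0).
    move=> M' sub Hm; have [Z [tZ sZ]] := transv_exists Xtriv x0 Hm.
    apply: resolving_mono (HZ Z tZ) _; rewrite subUset sZ andbT.
    by apply: subset_trans sub; apply: subsetUl.
  apply: (game X2 Xtriv fuel' G).1.
  move=> P HP; right => x xP; rewrite !inE orbF.
  rewrite orbF; apply: contraNneq vX => <-; by apply/bigcupP; exists P.
by rewrite /ORk first; case: makerWinsSecond; auto.
Qed.
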